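(* In the polynomial ring $\mathbb{Z}_2[y_2,y_3]$ define a sequence $(z_n)_{n\geq1}$ by $z_1=0$, $z_2=1$, $z_3=0$ and $z_n=y_2z_{n-2}+y_3z_{n-3}$ for $n\geq4$. Then $z_n\neq 0$ for every $n\geq1$ that is not of the form $2^i-1$. *)

(* Defs.v *)
From HB Require Import structures.
From mathcomp Require Import all_boot all_order all_algebra.
From mathcomp Require Import mpoly.
Set Implicit Arguments. Unset Strict Implicit. Unset Printing Implicit Defensive.
Import GRing.Theory.
Local Open Scope ring_scope.

Definition PR := {mpoly 'F_2[2]}.
Definition y2 : PR := 'X_(0 : 'I_2).
Definition y3 : PR := 'X_(1 : 'I_2).

(* ztrip m = (z_{m+1}, z_{m+2}, z_{m+3}). *)
Fixpoint ztrip (m : nat) : PR * PR * PR :=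
  match m with
  | 0%N => (0, 1, 0)
  | m'.+1 => let: (a, b, c) := ztrip m' in (b, c, y2 * b + y3 * a)
  end.

(* z n for n >= 1 (z 0 is not used). *)
Definition z (n : nat) : PR := (ztrip n.-1).1.1.

(* Main.v *)
Require Import Defs.
From mathcomp Require Import all_boot all_order all_algebra.
From mathcomp Require Import mpoly ring zify.
Local Open Scope ring_scope.
Import GRing.Theory.

Lemma two0 : (2%:R : PR) = 0.
Proof. rewrite -(mpolyC_nat 2 [the nzRingType of 'F_2] 2).
have -> : (2%:R : 'F_2) = 0 by apply/val_inj.
by rewrite mpolyC0. Qed.

Lemma dy2 : mderiv (0 : 'I_2) y2 = 1.
Proof. rewrite /y2 mderivX mnm1E eqxx.
have sm : forall m : 'X_{1..2}, (m - m)%MM = 0%MM by move=> m; apply/mnmP => j; rewrite mnmBE subnn mnm0E.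
by rewrite sm mpolyX0 scale1r. Qed.

Lemma char2 (a b c : PR) : a - b = 2%:R * c -> a = b.
Proof. by rewrite two0 mul0r => /eqP; rewrite subr_eq0 => /eqP. Qed.

Definition f m : PR := (ztrip m).1.1.
Lemma fS m : f m.+3 = y2 * f m.+1 + y3 * f m.
Proof.
rewrite /f /=; case: (ztrip m) => [[a b] c] /=. by [].
Qed.

Lemma dbl k : f k.*2.+1 = f k.+1 ^+ 2 + y2 * f k ^+ 2 /\ f k.*2.+2 = y3 * f k ^+ 2.
Proof.
move: k; suff H : forall k, (f k.*2.+1 = f k.+1 ^+ 2 + y2 * f k ^+ 2 /\ f k.*2.+2 = y3 * f k ^+ 2) /\
  (f k.+1.*2.+1 = f k.+2 ^+ 2 + y2 * f k.+1 ^+ 2 /\ f k.+1.*2.+2 = y3 * f k.+1 ^+ 2).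
  by move=> k; case: (H k).
elim=> [|k [[IH1 IH2] [IH3 IH4]]].
  split; split; rewrite /f /=; ring.
split; first by split.
rewrite !doubleS.
have E5 : f (k.*2.+2).+3 = y2 * f k.*2.+3 + y3 * f k.*2.+2 by rewrite fS.
have E6 : f (k.*2.+3).+3 = y2 * f k.*2.+4 + y3 * f k.*2.+3 by rewrite fS.
move: IH3 IH4; rewrite !doubleS => IH3 IH4.
split.
  rewrite E5 IH3 IH2 (fS k).
  apply: (@char2 _ _ (- (y2 * y3 * f k.+1 * f k))); ring.
rewrite E6 IH4 IH3.
apply: (@char2 _ _ (y2 * y3 * f k.+1 ^+ 2)). ring.
Qed.

Lemma sqsum (A B : PR) : (A != 0) || (B != 0) -> A ^+ 2 + y2 * B ^+ 2 != 0.
Proof.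
move=> hAB; apply/eqP => H.
have HB : B = 0.
  have := congr1 (mderiv (0 : 'I_2)) H.
  rewrite mderiv0 mderivD !expr2 !mderivM dy2 => H2.
  have : B * B = 0.
    rewrite -H2; apply: (@char2 _ _ (- (mderiv 0 A * A + y2 * mderiv 0 B * B))); ring.
  by move/eqP; rewrite mulf_eq0 orbb => /eqP.
move: H; rewrite HB !expr2 mul0r mulr0 addr0 => /eqP; rewrite mulf_eq0 orbb => /eqP HA.
by move: hAB; rewrite HA HB eqxx.
Qed.

Lemma nopow2 a i j : a.+2 = (2 ^ i)%N -> a.+3 <> (2 ^ j)%N.
Proof.
move=> e1 e2.
case: i e1 => [|i] e1; first by rewrite expn0 in e1.
case: j e2 => [|j] e2; first by rewrite expn0 in e2.
have := congr1 odd e1; have := congr1 odd e2; rewrite !oddX /=.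
by case: (odd a).
Qed.

Lemma y3n0 : y3 != 0.
Proof.
apply/eqP => h; have := congr1 (mderiv (1 : 'I_2)) h.
rewrite mderiv0 /y3 mderivX mnm1E eqxx.
have sm : forall m : 'X_{1..2}, (m - m)%MM = 0%MM by move=> m; apply/mnmP => j; rewrite mnmBE subnn mnm0E.
by rewrite sm mpolyX0 scale1r => /eqP; rewrite oner_eq0.
Qed.

Lemma fnz m : (forall i, m.+2 <> (2 ^ i)%N) -> f m != 0.
Proof.
elim/ltn_ind: m => m IH hm.
move: (odd_double_half m); case: (odd m); case: (m./2) => [|k] /= e; subst m.
- by rewrite /f /= oner_eq0.
- rewrite add1n (proj1 (dbl k.+1)); apply: sqsum.
  apply/orP; case: (eqVneq (f k.+2) 0) => [h1|h1]; [right|by left].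
  apply: (IH); first by rewrite add1n ltnS doubleS; lia.
  move=> i e; move/eqP: h1; apply/negP; apply: (IH).
    by rewrite add1n ltnS doubleS; lia.
  move=> j; exact: (@nopow2 k.+1 i j e).
- by case: (hm 1%N).
- rewrite add0n doubleS (proj2 (dbl k)) mulf_neq0 ?y3n0 // expf_neq0 //.
  apply: (IH); first by rewrite add0n doubleS; lia.
  move=> i e; apply: (hm i.+1).
  by rewrite add0n expnS -e mul2n !doubleS.
Qed.

Theorem lemma9p3 (n : nat) :
  (1 <= n)%N -> (forall i : nat, n <> (2 ^ i - 1)%N) -> z n != 0.
Proof.
case: n => [|m] // _ h.
apply: fnz => i e; apply: (h i).
by rewrite -e subn1.
Qed.
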